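(* Let $1\le d\le n-2$ and let $H$ be a $d$-hypercut over $[n]$. Then the facet graph $G_d(H)$ is $(n-d-1)$-connected.
   Context: Fix a field $\mathbb F$. A $d$-simplex is a $(d+1)$-element subset of $[n]$ oriented by increasing order. For a simplex $\rho$ and $\tau=\rho\setminus\{p\}$ with $p$ the $i$-th smallest element of $\rho$, $\mathrm{sign}(\rho,\tau)=(-1)^{i-1}$. A $d$-cochain is a formal $\mathbb F$-combination of $d$-simplices; the coboundary is $\delta\tau=\sum_{p\in[n]\setminus\tau}\mathrm{sign}(\tau\cup\{p\},\tau)(\tau\cup\{p\})$, extended linearly. A $d$-cocycle is a $d$-cochain $Z$ with $\delta Z=0$; a $d$-hypercut is a nonzero $d$-cocycle $H$ such that every $d$-cocycle supported in $\mathrm{Supp}(H)$ is a scalar multiple of $H$. The facet graph $G_d(H)$ has vertex set $\mathrm{Supp}(H)$, two $d$-simplices adjacent iff they share a $(d-1)$-face. A graph is $k$-connected if deleting any set of fewer than $k$ of its vertices leaves a nonempty connected graph. *)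

(* Defs.v *)
From HB Require Import structures.
From mathcomp Require Import all_boot all_order all_algebra.
Set Implicit Arguments. Unset Strict Implicit. Unset Printing Implicit Defensive.
Import GRing.Theory.
Local Open Scope ring_scope.

(* Vertex set [n] is 'I_n; a simplex is a finite set of vertices, a
   d-simplex one of cardinality d+1, oriented by increasing order. *)

Definition cochain (F : fieldType) (n : nat) := {ffun {set 'I_n} -> F}.

Definition is_dcochain (F : fieldType) (n d : nat) (Z : cochain F n) : Prop :=
  forall s : {set 'I_n}, Z s != 0 -> #|s| = d.+1.

(* sign(rho, rho \ {p}) = (-1)^(i-1), where p is the i-th smallest of rho;
   i-1 = number of elements of rho smaller than p. *)
Definition simplex_sign (F : fieldType) (n : nat) (rho : {set 'I_n}) (p : 'I_n) : F :=
  (-1) ^+ #|[set q in rho | (q < p)%N]|.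

(* Coefficient of rho in delta Z, obtained by expanding
   delta tau = sum_{p notin tau} sign(tau+p, tau) (tau+p) linearly. *)
Definition coboundary_coef (F : fieldType) (n : nat) (Z : cochain F n)
    (rho : {set 'I_n}) : F :=
  \sum_(p in rho) simplex_sign F rho p * Z (rho :\ p).

(* Z is a d-cocycle: a d-cochain with delta Z = 0 (delta Z is supported on
   (d+1)-simplices). *)
Definition is_dcocycle (F : fieldType) (n d : nat) (Z : cochain F n) : Prop :=
  is_dcochain d Z /\
  forall rho : {set 'I_n}, #|rho| = d.+2 -> coboundary_coef Z rho = 0.

Definition supp (F : fieldType) (n : nat) (Z : cochain F n) : {set {set 'I_n}} :=
  [set s | Z s != 0].

Definition is_hypercut (F : fieldType) (n d : nat) (H : cochain F n) : Prop :=
  [/\ is_dcocycle d H, H != 0 &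
      forall Z : cochain F n, is_dcocycle d Z -> supp Z \subset supp H ->
        exists a : F, forall s, Z s = a * H s].

Definition facet_adj (n d : nat) : rel {set 'I_n} :=
  fun s t => (s != t) && (#|s :&: t| == d)%N.

Definition induced_connected (T : finType) (e : rel T) (W : {set T}) : Prop :=
  forall x y, x \in W -> y \in W ->
    connect (fun u v => [&& u \in W, v \in W & e u v]) x y.

Definition k_connected (T : finType) (V : {set T}) (e : rel T) (k : nat) : Prop :=
  forall S : {set T}, S \subset V -> (#|S| < k)%N ->
    V :\: S != set0 /\ induced_connected e (V :\: S).

(* The facet graph G_d(H) has vertex set Supp(H) and adjacency facet_adj. *)

(* Main.v *)
Require Import Defs.
From HB Require Import structures.
From mathcomp Require Import all_boot all_order all_algebra.
From mathcomp Require Import zify.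
Import GRing.Theory.
Set Implicit Arguments. Unset Strict Implicit. Unset Printing Implicit Defensive.
Open Scope ring_scope.


Definition cob (F : fieldType) (n : nat) (g : cochain F n) : cochain F n :=
  [ffun r => coboundary_coef g r].

Lemma sign_nz (F : fieldType) (n : nat) (rho : {set 'I_n}) (p : 'I_n) :
  simplex_sign F rho p != 0.
Proof. by rewrite /simplex_sign expf_neq0 // oppr_eq0 oner_eq0. Qed.

Lemma sign_del (F : fieldType) (n : nat) (pi : {set 'I_n}) (p q : 'I_n) :
  p \in pi ->
  simplex_sign F pi q = (if (p < q)%N then -1 else 1) * simplex_sign F (pi :\ p) q.
Proof.
move=> pin; rewrite /simplex_sign.
have -> : [set r in pi :\ p | (r < q)%N] = [set r in pi | (r < q)%N] :\ p.
  by apply/setP=> r; rewrite !inE; case: (r != p); case: (r \in pi).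
rewrite (cardsD1 p [set r in pi | (r < q)%N]) inE pin /= exprD.
by case: (p < q)%N; rewrite ?expr1 ?expr0.
Qed.

Lemma sign_del' (F : fieldType) (n : nat) (pi : {set 'I_n}) (p q : 'I_n) :
  p \in pi ->
  simplex_sign F (pi :\ p) q = (if (p < q)%N then -1 else 1) * simplex_sign F pi q.
Proof.
move=> pin; rewrite (sign_del F q pin) mulrA.
by case: (p < q)%N; rewrite ?mulrNN ?mul1r.
Qed.

Lemma cobK (F : fieldType) (n : nat) (g : cochain F n) (pi : {set 'I_n}) :
  coboundary_coef (cob g) pi = 0.
Proof.
rewrite /coboundary_coef.
pose T (p q : 'I_n) := simplex_sign F pi p * simplex_sign F pi q * g (pi :\: [set p; q]).
pose u (p q : 'I_n) := if (q < p)%N then T p q else 0.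
have TC p q : T p q = T q p.
  by rewrite /T (setUC [set p]) [simplex_sign F pi p * _]mulrC.
have step : forall p, p \in pi ->
   simplex_sign F pi p * cob g (pi :\ p) = \sum_(q in pi) (u p q - u q p).
  move=> p pin; rewrite ffunE /coboundary_coef big_distrr /=.
  rewrite (bigD1 p pin) /= /u ltnn subrr add0r.
  apply: eq_big => [q|q]; first by rewrite !inE andbC.
  rewrite !inE => /andP [qp qin].
  rewrite (sign_del' F q pin) setDDl.
  have -> : [set p] :|: [set q] = [set p; q] by [].
  case: ltngtP => [pq|qp'|eqpq].
    by rewrite sub0r -TC /T mulN1r mulNr mulrN !mulrA.
  - by rewrite subr0 mul1r /T !mulrA.
  - by move: qp; rewrite -val_eqE /= eqpq eqxx.
rewrite (eq_bigr (fun p => \sum_(q in pi) (u p q - u q p))); last exact: step.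
rewrite (eq_bigr (fun p => \sum_(q in pi) u p q - \sum_(q in pi) u q p)); last first.
  by move=> p _; rewrite sumrB.
by rewrite sumrB exchange_big subrr.
Qed.


Lemma cob_lin (F : fieldType) (n : nat) (a b : F) (g1 g2 : cochain F n) r :
  coboundary_coef [ffun t => a * g1 t + b * g2 t] r =
  a * coboundary_coef g1 r + b * coboundary_coef g2 r.
Proof.
rewrite /coboundary_coef !big_distrr -big_split; apply: eq_bigr => p _.
by rewrite ffunE mulrDr (mulrCA _ a) (mulrCA _ b).
Qed.

Definition ind (F : fieldType) (n : nat) (s : {set 'I_n}) : cochain F n :=
  [ffun t => if t == s then 1 else 0].

Lemma ind_supp (F : fieldType) (n : nat) (s rho : {set 'I_n}) :
  coboundary_coef (ind F s) rho != 0 -> s \subset rho.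
Proof.
move=> H; apply/negPn/negP => ns; move: H; rewrite /coboundary_coef big1 ?eqxx //.
move=> p pr; rewrite ffunE; case: eqP => [e|]; last by rewrite mulr0.
by case/negP: ns; rewrite -e subD1set.
Qed.

Lemma ind_val (F : fieldType) (n : nat) (s : {set 'I_n}) (w : 'I_n) :
  w \notin s -> coboundary_coef (ind F s) (w |: s) = simplex_sign F (w |: s) w.
Proof.
move=> ws; rewrite /coboundary_coef (bigD1 w) ?setU11 //= ffunE setU1K // eqxx mulr1.
rewrite big1 ?addr0 // => p /andP [pin pw]; rewrite ffunE.
case: eqP => [e|]; last by rewrite mulr0.
by move: ws; rewrite -e !inE eq_sym (negbTE pw) eqxx.
Qed.

Lemma two_terms (F : fieldType) (n : nat) (Q : cochain F n) (s : {set 'I_n}) (w1 w2 : 'I_n) :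
  w1 \notin s -> w2 \notin s -> w1 != w2 ->
  coboundary_coef Q (w1 |: (w2 |: s)) = 0 ->
  (forall p, p \in s -> Q ((w1 |: (w2 |: s)) :\ p) = 0) ->
  Q (w1 |: s) = 0 -> Q (w2 |: s) = 0.
Proof.
move=> w1s w2s w12 cQ zQ Q1.
have w1n : w1 \notin w2 |: s by rewrite !inE negb_or w12.
have w2n : w2 \notin w1 |: s by rewrite !inE negb_or eq_sym w12.
move: cQ; rewrite /coboundary_coef (bigD1 w1) ?setU11 //= setU1K //.
rewrite (bigD1 w2) /=; last by rewrite !inE eqxx orbT eq_sym w12.
rewrite setUCA setU1K // Q1 mulr0 add0r.
rewrite big1 ?addr0; last first.
  move=> p /andP [/andP [pin pw1] pw2]; rewrite setUCA zQ ?mulr0 //.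
  by move: pin; rewrite !inE (negbTE pw1) (negbTE pw2).
by move/eqP; rewrite mulf_eq0 (negbTE (sign_nz _ _ _)) /= => /eqP.
Qed.


Lemma sub_U1 (n : nat) (s' A : {set 'I_n}) (w : 'I_n) :
  s' \subset w |: A -> w \notin s' -> s' \subset A.
Proof.
move=> /subsetP H ws; apply/subsetP => x xs; move: (H x xs); rewrite !inE.
by case/orP => // /eqP e; move: ws; rewrite -e xs.
Qed.

Lemma card_U1 (n : nat) (s : {set 'I_n}) (w : 'I_n) :
  w \notin s -> #|w |: s| = #|s|.+1.
Proof. by move=> ws; rewrite cardsU1 ws. Qed.

Lemma eq_sub_card (n : nat) (s' s : {set 'I_n}) :
  s' \subset s -> #|s'| = #|s| -> s' = s.
Proof. by move=> H c; apply/eqP; rewrite eqEcard H c leqnn. Qed.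

Lemma decomp1 (n : nat) (s rho : {set 'I_n}) :
  s \subset rho -> #|rho| = #|s|.+1 -> exists2 w, w \notin s & rho = w |: s.
Proof.
move=> H c.
have : #|rho :\: s| = 1%N.
  by rewrite cardsD (setIidPr H) c subSn // subnn.
move/eqP/cards1P => [w e].
have wr : w \in rho :\: s by rewrite e set11.
move: wr; rewrite inE => /andP [ws wr]; exists w => //.
apply/setP => x; rewrite !inE; apply/idP/idP.
  move=> xr; case xs: (x \in s); first by rewrite orbT.
  have : x \in rho :\: s by rewrite inE xs xr.
  by rewrite e inE => ->.
by case/orP => [/eqP -> //|]; apply: (subsetP H).
Qed.

Lemma viol (n : nat) (s s' : {set 'I_n}) (x w0 w : 'I_n) :
  #|s'| = #|s| -> s' != s -> ~~ (s' \subset w0 |: s) -> ~~ (s' \subset w |: s) ->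
  [|| s' \subset x |: s, s' \subset w0 |: (x |: s) | s' \subset x |: (w |: s)] ->
  (x \in s') && (s' \subset x |: (w0 |: (w |: s))).
Proof.
move=> c ne n0 nw H.
have xin : x \in s'.
  apply/negPn/negP => xs; case/or3P: H => H;
   first [ by move/negP: ne; apply; apply/eqP/eq_sub_card => //; exact: sub_U1 H xs
         | by move/negP: n0; apply; apply: (@sub_U1 _ s' (w0 |: s) x) => //; rewrite setUCA
         | by move/negP: nw; apply; apply: sub_U1 H xs ].
rewrite xin /=; case/or3P: H => H; apply: (subset_trans H); apply/subsetP => y;
  rewrite !inE; by case: (y == x); case: (y == w0); case: (y == w); case: (y \in s).
Qed.


Lemma lemD (F : fieldType) (n d : nat) (k : nat) : forall (S : {set {set 'I_n}}),
  #|S| = k ->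
  (forall s : {set 'I_n}, s \in S -> #|s| = d.+1) -> (#|S| + d.+2 <= n)%N ->
  forall R : cochain F n,
  (forall pi : {set 'I_n}, #|pi| = d.+3 -> coboundary_coef R pi = 0) ->
  (forall rho : {set 'I_n}, #|rho| = d.+2 -> R rho != 0 -> exists2 s, s \in S & s \subset rho) ->
  exists e : cochain F n, (forall t : {set 'I_n}, e t != 0 -> t \in S) /\
     (forall rho : {set 'I_n}, #|rho| = d.+2 -> coboundary_coef e rho = R rho).
Proof.
elim: k => [|k IH] S cS Scard Sn R Rcoc Rsupp.
  exists [ffun => 0]; split=> [t|rho crho]; first by rewrite ffunE eqxx.
  have -> : coboundary_coef [ffun=> (0 : F)] rho = 0.
    by rewrite /coboundary_coef big1 // => p _; rewrite ffunE mulr0.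
  apply/esym/eqP/negP => /negP /(Rsupp _ crho) [s sS _].
  by move/eqP: cS; rewrite cards_eq0 => /eqP S0; rewrite S0 inE in sS.
have [s sS] : exists s, s \in S by apply/card_gt0P; rewrite cS.
set S' := S :\ s.
have cS' : #|S'| = k.
  by move: cS; rewrite (cardsD1 s S) sS add1n => -[].
have s_card := Scard s sS.
have S'P : forall t, t \in S' -> (t \in S) && (t != s).
  by move=> t; rewrite !inE andbC.
pose good1 (w : 'I_n) := [forall s' in S', ~~ (s' \subset w |: s)].
pose T := [set w | (w \notin s) && good1 w].
pose mu : F := if [pick w0 in T] is Some w0 then R (w0 |: s) / simplex_sign F (w0 |: s) w0 else 0.
pose R' : cochain F n := [ffun t => 1 * R t + (- mu) * cob (ind F s) t].
have R'E : forall t, R' t = R t - mu * coboundary_coef (ind F s) t.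
  by move=> t; rewrite !ffunE mul1r mulNr.
have F1 : forall pi : {set 'I_n}, #|pi| = d.+3 -> coboundary_coef R' pi = 0.
  by move=> pi cpi; rewrite cob_lin Rcoc // cobK !mulr0 addr0.
have F2 : forall a b p, a \notin s -> b \notin s -> a != b -> p \in s ->
    (forall s', s' \in S' -> ~~ (s' \subset a |: (b |: s))) ->
    R' ((a |: (b |: s)) :\ p) = 0.
  move=> a b p a_s b_s ab ps Hg.
  have ab' : a \notin b |: s by rewrite !inE negb_or ab.
  have cpi : #|(a |: (b |: s)) :\ p| = d.+2.
    have : p \in a |: (b |: s) by rewrite !inE ps !orbT.
    move=> pin; move: (cardsD1 p (a |: (b |: s))).
    by rewrite pin card_U1 // card_U1 // s_card add1n => -[] <-.
  rewrite R'E.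
  have -> : R ((a |: (b |: s)) :\ p) = 0.
    apply/eqP/negP => /negP /(Rsupp _ cpi) [s'' s''S sub''].
    case: (eqVneq s'' s) => [e|ne].
      by move: (subsetP sub'' p); rewrite e ps => /(_ isT); rewrite !inE eqxx.
    have : s'' \in S' by rewrite !inE ne s''S.
    move/Hg/negP; apply; apply: subset_trans sub'' _; exact: subD1set.
  have -> : coboundary_coef (ind F s) ((a |: (b |: s)) :\ p) = 0.
    apply/eqP/negP => /negP /ind_supp /subsetP /(_ p ps); by rewrite !inE eqxx.
  by rewrite mulr0 subr0.
have F3 : forall w, w \in T -> R' (w |: s) = 0.
  move=> w wT.
  have [w0 w0T Hmu] : exists2 w0, w0 \in T & mu = R (w0 |: s) / simplex_sign F (w0 |: s) w0.
    rewrite /mu; case: pickP => [w0 w0T|none]; first by exists w0.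
    by move: (none w); rewrite wT.
  have TP : forall x, x \in T -> (x \notin s) && good1 x by move=> x; rewrite inE.
  have [w0s w0g] := andP (TP _ w0T).
  have [ws wg] := andP (TP _ wT).
  have R'0 : R' (w0 |: s) = 0.
    by rewrite R'E Hmu ind_val // divfK ?subrr // sign_nz.
  pose pg a b := [forall s' in S', ~~ (s' \subset a |: (b |: s))].
  have step : forall a b, a \notin s -> b \notin s -> a != b -> pg a b ->
      R' (a |: s) = 0 -> R' (b |: s) = 0.
    move=> a b a_s b_s ab g Ha; apply: (two_terms (Q := R')) Ha => //.
      apply: F1; rewrite card_U1; last by rewrite !inE negb_or ab.
      by rewrite card_U1 // s_card.
    by move=> p ps; apply: F2 => // s' s'S; move/forall_inP: g; apply.
  case: (eqVneq w w0) => [-> // | ww0].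
  case: (boolP (pg w0 w)) => [g|ng]; first by apply: (step w0 w) => //; rewrite eq_sym.
  have [s0 s0S' s0sub] : exists2 s0, s0 \in S' & s0 \subset w0 |: (w |: s).
    by move/forall_inPn: ng => [s0 H1 /negPn H2]; exists s0.
  pose Cand := (~: s) :\ w0 :\ w.
  pose goodw (x : 'I_n) := [&& good1 x, pg w0 x & pg x w].
  have [w' w'C w'g] : exists2 w', w' \in Cand & goodw w'.
    case: (boolP [exists x in Cand, goodw x]) => [/exists_inP [x ? ?]|nex]; first by exists x.
    exfalso.
    pose g (t : {set 'I_n}) := odflt w0 [pick x in (t :\: s) :\ w0 :\ w].
    have sub : Cand \subset [set g t | t in S' :\ s0].
      apply/subsetP => x xC.
      have xC' := xC; rewrite !inE in xC'; case/and3P: xC' => xw xw0 xs.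
      have bad : ~~ goodw x by apply/negP => gx; apply: (negP nex); apply/exists_inP; exists x.
      have [s' s'S' viols'] : exists2 s', s' \in S' &
          [|| s' \subset x |: s, s' \subset w0 |: (x |: s) | s' \subset x |: (w |: s)].
        move: bad; rewrite /goodw !negb_and; case/or3P.
        - by move/forall_inPn => [s' H1 /negPn H2]; exists s' => //; rewrite H2.
        - by move/forall_inPn => [s' H1 /negPn H2]; exists s' => //; rewrite H2 orbT.
        - by move/forall_inPn => [s' H1 /negPn H2]; exists s' => //; rewrite H2 !orbT.
      have [s'S s's] := andP (S'P _ s'S').
      have /andP [xin s'sub] := viol (etrans (Scard _ s'S) (esym s_card)) s's
        (forall_inP w0g s' s'S') (forall_inP wg s' s'S') viols'.
      apply/imsetP; exists s'.
        rewrite !inE s's s'S !andbT; apply/eqP => e.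
        move: (subsetP s0sub x); rewrite -e xin => /(_ isT).
        by rewrite !inE (negbTE xw0) (negbTE xw) (negbTE xs).
      rewrite /g; case: pickP => [y|none] /=.
        rewrite !inE => /and4P [yw yw0 ys ys'].
        move: (subsetP s'sub y ys'); rewrite !inE (negbTE yw) (negbTE yw0) (negbTE ys) !orbF.
        by move/eqP.
      by move: (none x); rewrite !inE xin xw xw0 xs.
    have c1 := subset_leq_card sub; have c2 := leq_imset_card g (S' :\ s0).
    have cC : #|Cand| = (n - d.+1 - 2)%N.
      move: (cardsD1 w0 (~: s)) (cardsD1 w (~: s :\ w0)).
      rewrite !inE w0s ws ww0 cardsCs setCK card_ord s_card -/Cand /=.
      move: #|Cand| => c; clear; lia.
    have cS0 : #|S' :\ s0| = (k - 1)%N.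
      move: (cardsD1 s0 S'); rewrite s0S' cS'.
      move: #|S' :\ s0| => c; clear; lia.
    have kpos : (0 < k)%N by rewrite -cS'; apply/card_gt0P; exists s0.
    move: Sn c1 c2; rewrite cS cC cS0 => h1 h2 h3.
    have := leq_trans h2 h3; clear -h1 kpos; lia.
  case/and3P: w'g => w'g1 pg0 pg1.
  have w'C' := w'C; rewrite !inE in w'C'; case/and3P: w'C' => w'w w'w0 w's.
  apply: (step w' w) => //.
  by apply: (step w0 w') => //; rewrite eq_sym.
have F4 : forall rho : {set 'I_n}, #|rho| = d.+2 -> R' rho != 0 -> exists2 s', s' \in S' & s' \subset rho.
  move=> rho crho.
  case: (boolP [exists s' in S', s' \subset rho]) => [/exists_inP [s' H1 H2]|nex].
    by move=> _; exists s'.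
  move=> R'nz; exfalso; move: R'nz; apply/negP; rewrite negbK.
  case: (boolP (s \subset rho)) => [srho | nsrho].
    have [w ws erho] : exists2 w, w \notin s & rho = w |: s by apply: decomp1 srho _; rewrite crho s_card.
    have wT : w \in T.
      rewrite inE ws /=; apply/forall_inP => s' s'S; apply/negP => sub.
      by apply: (negP nex); apply/exists_inP; exists s' => //; rewrite erho.
    by rewrite erho F3.
  rewrite R'E.
  have -> : R rho = 0.
    apply/eqP/negP => /negP /(Rsupp _ crho) [s'' s''S sub].
    case: (eqVneq s'' s) => [e|ne]; first by move: nsrho; rewrite -e sub.
    by apply: (negP nex); apply/exists_inP; exists s'' => //; rewrite !inE ne.
  have -> : coboundary_coef (ind F s) rho = 0.
    by apply/eqP/negP => /negP /ind_supp; rewrite (negbTE nsrho).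
  by rewrite mulr0 subr0.
have [e' [e'supp e'cob]] := IH S' cS'
   (fun t Ht => Scard t (andP (S'P t Ht)).1)
   ltac:(move: Sn; rewrite cS cS'; lia) R' F1 F4.
exists [ffun t => 1 * e' t + mu * ind F s t]; split.
  move=> t; rewrite !ffunE mul1r.
  case: (eqVneq t s) => [->//|ne]; rewrite mulr0 addr0 => /e'supp.
  by rewrite inE => /andP [].
move=> rho crho; rewrite cob_lin e'cob // R'E mul1r.
by rewrite subrK.
Qed.


Lemma big_supp (F : fieldType) (n d : nat) (H : cochain F n) :
  is_dcocycle d H -> H != 0 -> (n - d <= #|supp H|)%N.
Proof.
move=> [Hch Hcoc] Hnz.
have [x Hx] : exists x, H x != 0.
  case: (boolP [exists x, H x != 0]) => [/existsP [x Hx]|nex]; first by exists x.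
  case/negP: Hnz; apply/eqP/ffunP => t; rewrite ffunE.
  by apply/eqP; apply/negPn/negP => Ht; apply: (negP nex); apply/existsP; exists t.
have cx := Hch x Hx.
pose g (w : 'I_n) := if [pick p | (p \in w |: x) && (p != w) && (H ((w |: x) :\ p) != 0)]
   is Some p then (w |: x) :\ p else x.
have gP : forall w, w \notin x -> [/\ H (g w) != 0, w \in g w & g w \subset w |: x].
  move=> w wx; rewrite /g; case: pickP => [p /andP [/andP [pin pw] Hp]|none].
    by split => //; [rewrite !inE eqxx eq_sym pw | exact: subD1set].
  exfalso.
  have := Hcoc (w |: x); rewrite card_U1 // cx => /(_ erefl).
  rewrite /coboundary_coef (bigD1 w) ?setU11 //= setU1K //.
  rewrite big1 ?addr0; last first.
    move=> p /andP [pin pw]; move: (none p); rewrite pin pw /=.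
    by move/negbFE/eqP ->; rewrite mulr0.
  by move/eqP; rewrite mulf_eq0 (negbTE (sign_nz _ _ _)) (negbTE Hx).
have ginj : {in ~: x &, injective g}.
  move=> w1 w2; rewrite !inE => w1x w2x e.
  have [_ w1g _] := gP w1 w1x; have [_ _ sub2] := gP w2 w2x.
  move: (subsetP sub2 w1); rewrite -e => /(_ w1g); rewrite !inE (negbTE w1x) orbF.
  by move/eqP.
have sub : x |: (g @: ~: x) \subset supp H.
  apply/subsetP => t; rewrite !inE => /orP [/eqP ->|/imsetP [w]]; first by [].
  by rewrite inE => wx ->; have [] := gP w wx.
have xn : x \notin g @: ~: x.
  apply/imsetP => -[w]; rewrite inE => wx e.
  by have [_ wg _] := gP w wx; move: wx; rewrite e wg.
have := subset_leq_card sub; rewrite cardsU1 xn card_in_imset //.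
rewrite [#|~: x|]cardsCs setCK card_ord cx /= => h; apply: leq_trans h; lia.
Qed.


Lemma adj_facets (n d : nat) (rho : {set 'I_n}) (p q : 'I_n) :
  #|rho| = d.+2 -> p \in rho -> q \in rho -> p != q ->
  facet_adj d (rho :\ p) (rho :\ q).
Proof.
move=> c pr qr pq; rewrite /facet_adj; apply/andP; split.
  apply/negP => /eqP e; have : q \in rho :\ p by rewrite !inE eq_sym pq.
  by rewrite e !inE eqxx.
have -> : (rho :\ p) :&: (rho :\ q) = (rho :\ p) :\ q.
  by apply/setP => t; rewrite !inE; case: (t == p); case: (t == q); case: (t \in rho).
have qr' : q \in rho :\ p by rewrite !inE eq_sym pq.
move: (cardsD1 p rho) (cardsD1 q (rho :\ p)); rewrite pr qr' c.
move=> h1 h2; apply/eqP; rewrite !add1n in h1 h2; case: h1 => h1; rewrite -h1 in h2; by case: h2.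
Qed.

Unset Implicit Arguments.
Theorem theorem4p7 (F : fieldType) (n d : nat) (H : cochain F n) :
  (1 <= d)%N -> (d + 2 <= n)%N -> is_hypercut d H ->
  k_connected (supp H) (@facet_adj n d) (n - d - 1).
Proof.
move=> d1 dn [[Hch Hcoc] Hnz Hmin] S SX Scard.
have HX : forall t, (t \in supp H) = (H t != 0) by move=> t; rewrite inE.
have Sd : forall s, s \in S -> #|s| = d.+1.
  by move=> s sS; apply: Hch; rewrite -HX (subsetP SX).
split.
  have := big_supp (conj Hch Hcoc) Hnz => hs.
  apply/eqP => e.
  have : supp H \subset S by rewrite -setD_eq0 e.
  move/subset_leq_card; move: hs Scard; lia.
move=> x y xW yW.
set W := supp H :\: S.
set r := fun u v => [&& u \in W, v \in W & facet_adj d u v].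
apply/negPn/negP => ncon.
pose A := [set u in W | connect r x u].
have AW : forall u, u \in A -> u \in W by move=> u; rewrite inE => /andP [].
have Aclos : forall u v, u \in A -> v \in W -> facet_adj d u v -> v \in A.
  move=> u v uA vW adj; rewrite inE vW /=.
  move: uA; rewrite inE => /andP [uW cu]; apply: (connect_trans cu).
  by apply: connect1; rewrite /r uW vW adj.
pose HA : cochain F n := [ffun t => if t \in A then H t else 0].
pose R := cob HA.
have [e [esupp ecob]] : exists e : cochain F n, (forall t : {set 'I_n}, e t != 0 -> t \in S) /\
     (forall rho : {set 'I_n}, #|rho| = d.+2 -> coboundary_coef e rho = R rho).
  apply: (@lemD F n d #|S| S erefl Sd).
  - by move: Scard dn; lia.
  - by move=> pi _; apply: cobK.
  move=> rho crho.
  case: (boolP [exists s in S, s \subset rho]) => [/exists_inP [s sS sr] _| nex].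
    by exists s.
  rewrite /R ffunE => Hr; exfalso; move: Hr; apply/negP; rewrite negbK.
  case: (boolP [exists p in rho, (rho :\ p) \in A]) => [/exists_inP [p0 p0r p0A] | nA].
    have eqHA : forall p, p \in rho -> HA (rho :\ p) = H (rho :\ p).
      move=> p pr; rewrite /HA ffunE; case: ifP => // nA'.
      apply/eqP; rewrite eq_sym; apply/negPn/negP => Hp.
      have pW : rho :\ p \in W.
        rewrite !inE Hp andbT; apply/negP => pS; apply: (negP nex).
        by apply/exists_inP; exists (rho :\ p) => //; exact: subD1set.
      case: (eqVneq p p0) => [e|ne]; first by move: p0A; rewrite -e nA'.
      have := Aclos _ _ p0A pW (adj_facets crho p0r pr (ltac:(by rewrite eq_sym))).
      by rewrite nA'.
    have -> : coboundary_coef HA rho = coboundary_coef H rho.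
      by rewrite /coboundary_coef; apply: eq_bigr => p pr; rewrite eqHA.
    by apply/eqP; exact: Hcoc.
  rewrite /coboundary_coef big1 // => p pr; rewrite /HA ffunE ifF ?mulr0 //.
  by apply/negP => pA; apply: (negP nA); apply/exists_inP; exists p.
pose Z : cochain F n := [ffun t => 1 * HA t + (-1) * e t].
have ZX : forall t, Z t != 0 -> t \in supp H.
  move=> t; rewrite /Z ffunE mul1r mulN1r /HA ffunE.
  case: (boolP (t \in S)) => [tS _|ntS]; first by rewrite (subsetP SX).
  have -> : e t = 0 by apply/eqP/negP => /negP /esupp; rewrite (negbTE ntS).
  by rewrite oppr0 addr0; case: ifP => _; rewrite ?eqxx // HX.
have Zcoc : is_dcocycle d Z.
  split; first by move=> t /ZX; rewrite HX; apply: Hch.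
  move=> rho crho; rewrite cob_lin ecob // /R ffunE; by rewrite mul1r mulN1r subrr.
have ZsH : supp Z \subset supp H by apply/subsetP => t; rewrite inE; exact: ZX.
have [a Ha] := Hmin Z Zcoc ZsH.
have nS : forall t, t \in W -> e t = 0.
  move=> t tW; apply/eqP/negP => /negP /esupp tS.
  by move: tW; rewrite inE tS.
have yA : y \notin A by rewrite inE yW /=; exact: ncon.
have xA : x \in A by rewrite inE xW connect0.
have Hy : H y != 0 by rewrite -HX; move: yW; rewrite inE => /andP [].
have Hx : H x != 0 by rewrite -HX; move: xW; rewrite inE => /andP [].
have := Ha y; rewrite /Z ffunE /HA ffunE (negbTE yA) nS // !mulr0 addr0 => /esym/eqP.
rewrite mulf_eq0 (negbTE Hy) orbF => /eqP a0.
have := Ha x; rewrite /Z ffunE /HA ffunE xA nS // !mulr0 addr0 a0 mul0r mul1r.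
by move/eqP; rewrite (negbTE Hx).
Qed.
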